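(* For every nonzero $f\in S$, $\operatorname{ann}_S\big(D/D(f)\big)=S\cdot f$.
   Context: $\mathbb K$ is a field of characteristic zero, $S=\mathbb K[x_1,\dots,x_n]$, $D=\mathrm{Der}_{\mathbb K}(S)$, the free $S$-module with basis $\partial_i=\partial/\partial x_i$. For $g\in S$ and $e\ge1$, $D(g;e)=\{\delta\in D:\delta(g)\in g^eS\}$. For nonzero $f$ with factorization $f=c f_1^{e_1}\cdots f_r^{e_r}$ into pairwise non-associate irreducibles ($c\in\mathbb K^*$), $D(f)=\bigcap_i D(f_i;e_i)$. *)

(* Defs.v *)
From HB Require Import structures.
From mathcomp Require Import all_boot all_order all_algebra.
Set Implicit Arguments. Unset Strict Implicit. Unset Printing Implicit Defensive.
Import Order.TTheory GRing.Theory Num.Theory.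
Local Open Scope ring_scope.

(* S = K[x_1,...,x_n], built as the iterated polynomial ring
   K[x_1][x_2]...[x_n]  (mpoly K 0 = K, mpoly K n.+1 = {poly mpoly K n}). *)
Fixpoint mpoly (K : fieldType) (n : nat) : idomainType :=
  match n with
  | 0 => K
  | n'.+1 => ({poly mpoly K n'} : idomainType)
  end.

(* partial derivative d/dx_i on mpoly K n; the outermost variable has the
   largest index (ord_max), inner variables are differentiated coefficientwise *)
Fixpoint pderiv (K : fieldType) (n : nat) : 'I_n -> mpoly K n -> mpoly K n :=
  match n return 'I_n -> mpoly K n -> mpoly K n with
  | 0 => fun _ p => p
  | n'.+1 => fun i (p : {poly mpoly K n'}) =>
      match unlift ord_max i with
      | None => deriv p
      | Some j => map_poly (@pderiv K n' j) p
      end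
  end.

(* Der_K(S): the free S-module with basis the partial derivatives;
   a derivation sum_i a_i d_i is represented by its coefficient vector a. *)
Definition der (K : fieldType) (n : nat) := 'I_n -> mpoly K n.

Definition der_app (K : fieldType) (n : nat) (delta : der K n) (g : mpoly K n)
  : mpoly K n := \sum_(i < n) delta i * pderiv i g.

Definition der_scale (K : fieldType) (n : nat) (s : mpoly K n) (delta : der K n)
  : der K n := fun i => s * delta i.

Definition mdvd (K : fieldType) (n : nat) (a b : mpoly K n) : Prop :=
  exists q : mpoly K n, b = q * a.

Definition mirreducible (K : fieldType) (n : nat) (g : mpoly K n) : Prop :=
  g != 0 /\ g \isn't a GRing.unit /\
  forall a b : mpoly K n, g = a * b -> a \is a GRing.unit \/ b \is a GRing.unit.

Definition DerLog (K : fieldType) (n : nat) (g : mpoly K n) (e : nat) (delta : der K n)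
  : Prop := mdvd (g ^+ e) (der_app delta g).

(* D(f) = intersection of D(f_i;e_i) over the irreducible factors f_i of f,
   e_i being the exact multiplicity of f_i in f (g^e | f and not g^(e+1) | f). *)
Definition DerLogf (K : fieldType) (n : nat) (f : mpoly K n) (delta : der K n) : Prop :=
  forall (g : mpoly K n) (e : nat), mirreducible g -> (0 < e)%N ->
    mdvd (g ^+ e) f -> ~ mdvd (g ^+ e.+1) f -> DerLog g e delta.

Definition ann_quot (K : fieldType) (n : nat) (f : mpoly K n) (s : mpoly K n) : Prop :=
  forall delta : der K n, DerLogf f (der_scale s delta).

(* Main.v *)
Require Import Defs.
From HB Require Import structures.
From mathcomp Require Import all_boot all_order all_algebra.
From Stdlib Require Import Classical.
Set Implicit Arguments. Unset Strict Implicit. Unset Printing Implicit Defensive.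
Import GRing.Theory.
Local Open Scope ring_scope.

Definition dv (R : idomainType) (a b : R) : Prop := exists q : R, b = q * a.
Definition irr (R : idomainType) (g : R) : Prop :=
  g != 0 /\ g \isn't a GRing.unit /\
  forall a b : R, g = a * b -> a \is a GRing.unit \/ b \is a GRing.unit.
Definition prm (R : idomainType) (g : R) : Prop :=
  g != 0 /\ g \isn't a GRing.unit /\
  forall a b : R, dv g (a * b) -> dv g a \/ dv g b.

Section Dv.
Variable R : idomainType.
Implicit Types a b c d g x y : R.

Lemma dv_refl a : dv a a. Proof. by exists 1; rewrite mul1r. Qed.
Lemma dv0 a : dv a 0. Proof. by exists 0; rewrite mul0r. Qed.
Lemma dv_trans a b c : dv a b -> dv b c -> dv a c.
Proof. by move=> [q ->] [r ->]; exists (r * q); rewrite mulrA. Qed.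
Lemma dv_mull a b c : dv a b -> dv a (c * b).
Proof. by move=> [q ->]; exists (c * q); rewrite mulrA. Qed.
Lemma dv_mulr a b c : dv a b -> dv a (b * c).
Proof. by move=> h; rewrite mulrC; apply: dv_mull. Qed.
Lemma dv_mulf a b : dv a (b * a). Proof. by exists b. Qed.
Lemma dv_mulfl a b : dv a (a * b). Proof. by exists b; rewrite mulrC. Qed.
Lemma dv_add a b c : dv a b -> dv a c -> dv a (b + c).
Proof. by move=> [q ->] [r ->]; exists (q + r); rewrite mulrDl. Qed.
Lemma dv_opp a b : dv a b -> dv a (- b).
Proof. by move=> [q ->]; exists (- q); rewrite mulNr. Qed.
Lemma dv_sub a b c : dv a b -> dv a c -> dv a (b - c).
Proof. by move=> h1 h2; apply: dv_add => //; apply: dv_opp. Qed.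
Lemma dv_subr a b c : dv a (b - c) -> dv a c -> dv a b.
Proof. by move=> h1 h2; have := dv_add h1 h2; rewrite subrK. Qed.
Lemma dv_unit u a : u \is a GRing.unit -> dv u a.
Proof. by move=> hu; exists (a / u); rewrite divrK. Qed.
Lemma dv_mul2 a b c d : dv a b -> dv c d -> dv (a * c) (b * d).
Proof.
by move=> [q ->] [r ->]; exists (q * r); rewrite mulrACA.
Qed.
Lemma dv_cancel a b c : c != 0 -> dv (a * c) (b * c) -> dv a b.
Proof.
by move=> hc [q]; rewrite mulrA => /(mulIf hc) ->; exists q.
Qed.
Lemma dv_neq0 a b : b != 0 -> dv a b -> a != 0.
Proof. by move=> hb [q hq]; apply: contraNneq hb => ha; rewrite hq ha mulr0. Qed.
Lemma dv_exp g e e' : (e <= e')%N -> dv (g ^+ e) (g ^+ e').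
Proof. by move=> h; rewrite -(subnK h) exprD; apply: dv_mulf. Qed.
Lemma dv_unitr u a b : u \is a GRing.unit -> dv a (u * b) -> dv a b.
Proof.
move=> hu [q hq]; exists (u^-1 * q); by rewrite -mulrA -hq mulKr.
Qed.

Lemma prm_pow_cancel h g x e : prm h -> ~ dv h g -> dv (h ^+ e) (x * g) -> dv (h ^+ e) x.
Proof.
move=> [h0 [_ hp]] hg; elim: e x => [|e IH] x; first by rewrite expr0 => _; exists x; rewrite mulr1.
move=> hd; have : dv (h ^+ e) (x * g) by apply: dv_trans hd; apply: dv_exp.
move/IH=> [y hy]; move: hd; rewrite hy exprSr => hd.
have : dv h (y * g).
  apply: (@dv_cancel h (y * g) (h ^+ e)); first by rewrite expf_neq0.
  by rewrite mulrC (mulrC (y * g)) mulrA (mulrC _ y).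
case/hp => // -[z hz]; exists z; by rewrite hz -mulrA (mulrC h).
Qed.
End Dv.

Section Mu.
Variables (R : idomainType) (mu : R -> nat).
Hypothesis muM : forall a b : R, a != 0 -> b != 0 -> mu (a * b) = (mu a + mu b)%N.
Hypothesis mu0 : forall a : R, a != 0 -> mu a = 0%N -> a \is a GRing.unit.

Lemma mu_unit u : u \is a GRing.unit -> mu u = 0%N.
Proof.
move=> hu; have u0 : u != 0 by apply: contraTneq hu => ->; rewrite unitr0.
have ui0 : u^-1 != 0 by rewrite invr_eq0.
have h1 : mu 1 = 0%N.
  have := muM (oner_neq0 R) (oner_neq0 R); rewrite mulr1 => h.
  by apply/eqP; rewrite -(eqn_add2l (mu 1)) addn0 -h.
have := muM u0 ui0; rewrite mulrV // h1 => /esym /eqP; rewrite addn_eq0.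
by case/andP => /eqP.
Qed.

Lemma mu_pos a : a != 0 -> a \isn't a GRing.unit -> (0 < mu a)%N.
Proof. by move=> a0 au; rewrite lt0n; apply: contra au => /eqP; apply: mu0. Qed.

Lemma exirr (a : R) : a != 0 -> a \isn't a GRing.unit -> exists g : R, irr g /\ dv g a.
Proof.
have : forall N (a : R), (mu a <= N)%N -> a != 0 -> a \isn't a GRing.unit ->
  exists g : R, irr g /\ dv g a; last by move=> h; apply: h.
elim=> [|N IH] {}a hN a0 au.
  by move: (mu_pos a0 au); rewrite leqn0 in hN; rewrite (eqP hN).
apply: NNPP => hno; apply hno; exists a; split; last exact: dv_refl.
split=> //; split=> // b c habc.
case: (classic (b \is a GRing.unit)) => hb; first by left.
case: (classic (c \is a GRing.unit)) => hc; first by right.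
exfalso; have b0 : b != 0 by apply: contraNneq a0 => b0; rewrite habc b0 mul0r.
have c0 : c != 0 by apply: contraNneq a0 => c0; rewrite habc c0 mulr0.
have hbN : (mu b <= N)%N.
  have := mu_pos c0 (introN idP hc); move: hN; rewrite habc muM // => h1 h2.
  by rewrite -ltnS; apply: leq_trans h1; rewrite -addn1 leq_add2l.
have [g [hg hgb]] := IH b hbN b0 (introN idP hb).
apply: hno; exists g; split=> //; apply: dv_trans hgb _; rewrite habc; apply: dv_mulfl.
Qed.

Hypothesis irrP : forall g : R, irr g -> prm g.

Lemma fac_ind (Q : R -> Prop) :
  (forall u, u \is a GRing.unit -> Q u) ->
  (forall p c, irr p -> prm p -> c != 0 -> Q c -> Q (p * c)) ->
  forall c, c != 0 -> Q c.
Proof.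
move=> hu hs.
have : forall N (c : R), (mu c <= N)%N -> c != 0 -> Q c; last by move=> h c; apply: h.
elim=> [|N IH] c hN c0.
  by apply: hu; apply: mu0 => //; apply/eqP; rewrite -leqn0.
case: (classic (c \is a GRing.unit)) => cu; first exact: hu.
have [g [hg [q hq]]] := exirr c0 (introN idP cu).
have q0 : q != 0 by apply: contraNneq c0 => q0; rewrite hq q0 mul0r.
have [g0 [gu _]] := hg.
rewrite hq mulrC; apply: hs => //; first exact: irrP.
apply: IH => //; move: hN; rewrite hq muM // => h.
have := mu_pos g0 gu => h2; rewrite -ltnS; apply: leq_trans h.
by rewrite -addn1 leq_add2l.
Qed.
End Mu.
Lemma exmin (T : Type) (P : T -> Prop) (f : T -> nat) (x : T) :
  P x -> exists y, P y /\ forall z, P z -> (f y <= f z)%N.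
Proof.
have : forall N x, (f x <= N)%N -> P x -> exists y, P y /\ forall z, P z -> (f y <= f z)%N;
  last by move=> h; apply: h.
elim=> [|N IH] {}x hN hx.
  by exists x; split=> // z _; rewrite leqn0 in hN; rewrite (eqP hN).
case: (classic (exists z, P z /\ (f z < f x)%N)) => [[z [hz hzx]]|hno].
  by apply: (IH z) => //; rewrite -ltnS; apply: leq_trans hzx hN.
exists x; split=> // z hz; rewrite leqNgt; apply/negP => hlt; apply: hno; by exists z.
Qed.
Section PolyLift.
Variables (R : idomainType) (mu : R -> nat).
Hypothesis muM : forall a b : R, a != 0 -> b != 0 -> mu (a * b) = (mu a + mu b)%N.
Hypothesis mu0 : forall a : R, a != 0 -> mu a = 0%N -> a \is a GRing.unit.
Hypothesis irrP : forall g : R, irr g -> prm g.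

Definition pmu (p : {poly R}) : nat := ((size p).-1 + mu (lead_coef p))%N.

Lemma pmuM (a b : {poly R}) : a != 0 -> b != 0 -> pmu (a * b) = (pmu a + pmu b)%N.
Proof.
move=> a0 b0; rewrite /pmu size_mul // lead_coefM muM ?lead_coef_eq0 //.
move: a0 b0; rewrite -!size_poly_gt0.
case: (size a) => // sa; case: (size b) => // sb _ _.
by rewrite addSn addnS /= addnACA.
Qed.

Lemma unitC (c : R) : (c%:P \is a GRing.unit) = (c \is a GRing.unit).
Proof.
rewrite poly_unitE size_polyC coefC /=.
by have [->|_] := eqVneq c 0; rewrite ?unitr0.
Qed.

Lemma pmu0 (a : {poly R}) : a != 0 -> pmu a = 0%N -> a \is a GRing.unit.
Proof.
move=> a0 /eqP; rewrite /pmu addn_eq0 => /andP [/eqP hs /eqP hm].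
have hs1 : size a = 1%N by move: a0 hs; rewrite -size_poly_gt0; case: (size a) => // -[].
rewrite poly_unitE hs1 eqxx /=; have := mu0 _ hm.
by rewrite lead_coef_eq0 a0 lead_coefE hs1 => ->.
Qed.

Lemma dvCC (c a : R) : dv c%:P a%:P <-> dv c a.
Proof.
split=> [[q hq]|[q ->]]; last by exists q%:P; rewrite polyCM.
by exists q`_0; have := congr1 (fun p : {poly R} => p`_0) hq; rewrite coefMC coefC.
Qed.

Lemma irrC (c : R) : irr (c%:P) -> irr c.
Proof.
move=> [c0 [cu hc]]; split; first by rewrite -polyC_eq0.
split; first by rewrite -unitC.
by move=> a b hab; move: (hc a%:P b%:P); rewrite -polyCM hab !unitC; apply.
Qed.

Definition ltm (a : {poly R}) : {poly R} := (lead_coef a)%:P * 'X^((size a).-1).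

Lemma size_sub_ltm (a : {poly R}) : a != 0 -> (size (a - ltm a)%R < size a)%N.
Proof.
move=> a0; have : (0 < size a)%N by rewrite size_poly_gt0.
move=> hs; rewrite -(prednK hs) ltnS; apply/leq_sizeP => j hj.
rewrite coefB coefCM coefXn.
case: (ltngtP j (size a).-1) => [|hj2|->]; first by rewrite ltnNge hj.
  rewrite mulr0 subr0; move/leq_sizeP: (leqnn (size a)); apply.
  by rewrite -(prednK hs).
by rewrite mulr1 -lead_coefE subrr.
Qed.

Lemma primeC (p : R) : prm p -> forall a b : {poly R},
  dv p%:P (a * b) -> dv p%:P a \/ dv p%:P b.
Proof.
move=> [p0 [pu hp]].
have : forall N (a b : {poly R}), (size a + size b <= N)%N ->
  dv p%:P (a * b) -> dv p%:P a \/ dv p%:P b; last by move=> h a b; apply: h.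
elim=> [|N IH] a b hN hab.
  by move: hN; rewrite leqn0 addn_eq0 => /andP [/eqP/eqP]; rewrite size_poly_eq0 => /eqP ->; left; apply: dv0.
have [->|a0] := eqVneq a 0; first by left; apply: dv0.
have [->|b0] := eqVneq b 0; first by right; apply: dv0.
have hlt : dv p%:P (ltm a) -> dv p%:P a \/ dv p%:P b.
  move=> hl.
  have h1 : (size (a - ltm a)%R + size b <= N)%N.
    by rewrite -ltnS; apply: leq_trans hN; rewrite ltn_add2r size_sub_ltm.
  have h2 : dv p%:P ((a - ltm a) * b).
    by rewrite mulrBl; apply: dv_sub => //; apply: dv_mulr.
  case: (IH _ _ h1 h2) => h; last by right.
  by left; apply: dv_subr h hl.
have hltb : dv p%:P (ltm b) -> dv p%:P a \/ dv p%:P b.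
  move=> hl.
  have h1 : (size a + size (b - ltm b)%R <= N)%N.
    by rewrite -ltnS; apply: leq_trans hN; rewrite ltn_add2l size_sub_ltm.
  have h2 : dv p%:P (a * (b - ltm b)).
    by rewrite mulrBr; apply: dv_sub => //; apply: dv_mull.
  case: (IH _ _ h1 h2) => h; first by left.
  by right; apply: dv_subr h hl.
have hlc : dv p (lead_coef a * lead_coef b).
  case: hab => q hq; exists (lead_coef q).
  by rewrite -lead_coefM hq lead_coefM lead_coefC.
case: (hp _ _ hlc) => hl.
  by apply: hlt; rewrite /ltm; apply: dv_mulr; apply/dvCC.
by apply: hltb; rewrite /ltm; apply: dv_mulr; apply/dvCC.
Qed.
Definition primitive (p : {poly R}) := forall c : R, prm c -> ~ dv c%:P p.

Lemma cancelC (p : {poly R}) : primitive p -> forall c : R, c != 0 ->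
  forall x, dv p (c%:P * x) -> dv p x.
Proof.
move=> hp; apply: (fac_ind muM mu0 irrP (Q := fun c => forall x, dv p (c%:P * x) -> dv p x)).
  by move=> u hu x; apply: dv_unitr; rewrite unitC.
move=> r c _ hr c0 IH x [y hy].
have : dv r%:P (y * p) by rewrite -hy polyCM -mulrA; apply: dv_mulfl.
case/(primeC hr) => [[z hz]|hpp]; last by exfalso; apply: (hp r).
apply: IH; exists z; have r0 : r%:P != 0 by rewrite polyC_eq0; case: hr.
move: hy; rewrite polyCM hz [z * _]mulrC -!mulrA; exact: mulfI.
Qed.

Lemma splitC (p : {poly R}) : forall c : R, c != 0 -> forall h q : {poly R},
  c%:P * p = h * q -> exists (d : R) (h' q' : {poly R}), p = h' * q' /\ h = d%:P * h'.
Proof.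
apply: (fac_ind muM mu0 irrP (Q := fun c => forall h q : {poly R},
  c%:P * p = h * q -> exists (d : R) (h' q' : {poly R}), p = h' * q' /\ h = d%:P * h')).
  move=> u hu h q hq; exists 1, h, (u^-1%:P * q); split; last by rewrite mul1r.
  by rewrite mulrA (mulrC h) -mulrA -hq mulrA -polyCM mulVr // mul1r.
move=> r c _ hr c0 IH h q hq.
have r0 : r%:P != 0 by rewrite polyC_eq0; case: hr.
have : dv r%:P (h * q) by rewrite -hq polyCM -mulrA; apply: dv_mulfl.
case/(primeC hr) => [[h1 hh1]|[q1 hq1]].
  have : c%:P * p = h1 * q.
    apply: (mulfI r0).
    have e1 : r%:P * (c%:P * p) = (r * c)%:P * p by rewrite polyCM mulrA.
    have e2 : h1 * r%:P * q = r%:P * (h1 * q) by rewrite -mulrA mulrCA.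
    by rewrite e1 hq hh1 e2.
  case/IH => d [h' [q' [e1 e2]]]; exists (r * d), h', q'; split=> //.
  by rewrite hh1 e2 polyCM mulrC mulrA.
have : c%:P * p = h * q1.
  apply: (mulfI r0).
  have e1 : r%:P * (c%:P * p) = (r * c)%:P * p by rewrite polyCM mulrA.
  have e2 : h * (q1 * r%:P) = r%:P * (h * q1) by rewrite (mulrC q1) mulrCA.
  by rewrite e1 hq hq1 e2.
exact: IH.
Qed.

Lemma pirrP (p : {poly R}) : irr p -> prm p.
Proof.
move=> hirr; have [p0 [pu hp]] := hirr.
case: (leqP (size p) 1) => hs.
  have ep := size1_polyC hs; rewrite ep in hirr p0 pu *.
  have hc : prm p`_0 by apply: irrP; apply: irrC.
  by split=> //; split=> //; apply: primeC.
have hprim : primitive p.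
  move=> c hc [q hq]; have [c0 [cu _]] := hc.
  case: (hp q c%:P hq) => hu; last by move: hu; rewrite unitC; apply/negP.
  move: hu; rewrite poly_unitE => /andP [/eqP hq1 _].
  by move: hs; rewrite hq mulrC size_Cmul // hq1.
split=> //; split=> // a b hab.
case: (classic (dv p a)) => ha; [by left | right].
pose I (h : {poly R}) := exists u v : {poly R}, h = u * p + v * a.
have Ip : I p by exists 1, 0; rewrite mul1r mul0r addr0.
have Ia : I a by exists 0, 1; rewrite mul1r mul0r add0r.
have [h [[hI h0] hmin]] := @exmin _ (fun h => I h /\ h != 0) (@size R) p (conj Ip p0).
have key : forall x, I x -> exists c : R, c != 0 /\ c%:P * x = h * (x %/ h).
  move=> x [u [v hx]]; have [u' [v' hh]] := hI.
  exists (lead_coef h ^+ scalp x h); split; first by rewrite expf_neq0 // lead_coef_eq0.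
  have e := Pdiv.Idomain.divp_eq x h.
  suff hm0 : x %% h = 0 by rewrite mul_polyC e hm0 addr0 mulrC.
  have hlt : (size (x %% h)%R < size h)%N by rewrite Pdiv.Idomain.ltn_modp.
  apply/eqP; apply: contraTT hlt => hm; rewrite -leqNgt; apply: (hmin (x %% h)); split=> //.
  have -> : x %% h = lead_coef h ^+ scalp x h *: x - x %/ h * h by rewrite e addrC addKr.
  exists ((lead_coef h ^+ scalp x h)%:P * u - x %/ h * u');
  exists ((lead_coef h ^+ scalp x h)%:P * v - x %/ h * v').
  rewrite -mul_polyC hx hh !mulrBl !mulrDr !mulrA addrACA opprD.
  by rewrite addrACA.
have [c1 [c10 hc1]] := key p Ip.
have [d [h' [q' [e1 e2]]]] := splitC c10 hc1.
case: (hp h' q' e1) => hu.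
  move: hu; rewrite poly_unitE => /andP [/eqP hh1 _].
  have eh : h = (d * h'`_0)%:P by rewrite e2 polyCM -size1_polyC // hh1.
  have r0 : d * h'`_0 != 0 by rewrite -polyC_eq0 -eh.
  apply: (cancelC hprim r0); rewrite -eh.
  have [u [v hI']] := hI; rewrite hI' mulrDl.
  apply: dv_add; first by rewrite -mulrA mulrC -mulrA; apply: dv_mulfl.
  by rewrite -mulrA; apply: dv_mull.
exfalso; apply: ha.
have [c2 [c20 hc2]] := key a Ia.
apply: (cancelC hprim c20); rewrite hc2; apply: dv_mulr.
rewrite e2; apply: dv_mull.
have -> : h' = (q'^-1) * p by rewrite e1 mulrC mulrK.
by apply: dv_mulf.
Qed.

End PolyLift.

Fixpoint mmu (K : fieldType) (n : nat) : mpoly K n -> nat :=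
  match n return mpoly K n -> nat with
  | 0 => fun _ => 0%N
  | n'.+1 => fun p => pmu (@mmu K n') p
  end.

Lemma mpoly_ok (K : fieldType) (n : nat) :
  [/\ (forall a b : mpoly K n, a != 0 -> b != 0 -> mmu (a * b) = (mmu a + mmu b)%N),
      (forall a : mpoly K n, a != 0 -> mmu a = 0%N -> a \is a GRing.unit) &
      (forall g : mpoly K n, irr g -> prm g)].
Proof.
elim: n => [|n [h1 h2 h3]].
  split=> //=; first by move=> a a0 _; rewrite unitfE.
  by move=> g [g0 [gu _]]; exfalso; move: gu; rewrite unitfE g0.
split.
- exact: (pmuM h1).
- exact: (pmu0 h2).
- exact: (pirrP h1 h2 h3).
Qed.

Lemma mchar (K : fieldType) (hK : [pchar K] =i pred0) (n m : nat) :
  (m%:R == 0 :> mpoly K n) = (m == 0%N).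
Proof.
elim: n => [|n IH] /=; first exact: (pcharf0P K).1 hK m.
by rewrite -polyC_natr polyC_eq0 IH.
Qed.

Lemma pderiv0 (K : fieldType) (n : nat) (i : 'I_n) : pderiv i (0 : mpoly K n) = 0.
Proof.
elim: n i => [|n IH] i //=.
by case: (unlift ord_max i) => [j|]; [exact: map_poly0 | exact: deriv0].
Qed.

Lemma deriv_ok (K : fieldType) (hK : [pchar K] =i pred0) (n : nat) (g : mpoly K n) :
  irr g -> exists i : 'I_n, ~ dv g (pderiv i g).
Proof.
elim: n g => [|n IH] g hg.
  by exfalso; case: hg => g0 [gu _]; move: gu; rewrite unitfE g0.
have [_ _ h3] := mpoly_ok K n.
case: (leqP (size g) 1) => hs.
  have eg := size1_polyC hs; rewrite eg in hg.
  have [j hj] := IH _ (irrC hg).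
  exists (lift ord_max j); rewrite /= liftK => -[q hq]; apply: hj.
  exists q`_0; have := congr1 (fun p : {poly mpoly K n} => p`_0) hq.
  by rewrite coef_map_id0 ?pderiv0 // eg coefMC !coefC.
exists ord_max; rewrite /= unlift_none => -[q hq].
have g0 : g != 0 by case: hg.
have hd0 : g^`() != 0.
  move: (hs); case eN: (size g) => [|[|k]] // _.
  apply/eqP => /(congr1 (fun p : {poly mpoly K n} => p`_k)).
  rewrite coef_deriv coef0 -mulr_natr; apply/eqP; rewrite mulf_neq0 //.
    have : lead_coef g != 0 by rewrite lead_coef_eq0.
    by rewrite lead_coefE eN.
  by rewrite mchar.
have q0 : q != 0 by apply: contraNneq hd0 => q0; rewrite hq q0 mul0r.
have := lt_size_deriv g0; rewrite hq size_mul //.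
move: q0; rewrite -size_poly_gt0; case: (size q) => // sq _.
by rewrite addSn /= ltnNge leq_addl.
Qed.

Lemma exmax (Q : nat -> Prop) (e B : nat) :
  Q e -> (forall k, Q k -> (k <= B)%N) -> exists m, (e <= m)%N /\ Q m /\ ~ Q m.+1.
Proof.
move=> Qe hB.
have : forall d e, (B - e <= d)%N -> Q e -> exists m, (e <= m)%N /\ Q m /\ ~ Q m.+1;
  last by move=> h; exact: (h (B - e)%N e (leqnn _) Qe).
elim=> [|d IH] {}e he {}Qe.
  case: (classic (Q e.+1)) => hq; last by exists e.
  by have := hB _ hq; rewrite leqNgt -subn_eq0 -leqn0 he.
case: (classic (Q e.+1)) => hq; last by exists e.
have he' : (B - e.+1 <= d)%N by move: he; rewrite subnS; case: (B - e)%N.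
have [m [h1 h2]] := IH e.+1 he' hq.
by exists m; split=> //; apply: ltnW.
Qed.

Lemma mu_exp (K : fieldType) (n : nat) (g : mpoly K n) (k : nat) :
  g != 0 -> mmu (g ^+ k) = (k * mmu g)%N.
Proof.
have [h1 h2 _] := mpoly_ok K n.
move=> g0; elim: k => [|k IH]; first by rewrite expr0 (mu_unit h1 (unitr1 _)).
by rewrite exprS h1 ?expf_neq0 // IH mulSn.
Qed.

Unset Implicit Arguments.
Set Strict Implicit.
Theorem mainTheorem3 (K : fieldType) (hK : [pchar K] =i pred0) (n : nat)
  (f : mpoly K n) (hf : f != 0) :
  forall s : mpoly K n, ann_quot f s <-> mdvd f s.
Proof.
have [h1 h2 h3] := mpoly_ok K n.
move=> s; split => [hann|[q ->] delta g e hg he hge hnot].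
  have step1 : forall g e, irr g -> (0 < e)%N -> dv (g ^+ e) f -> ~ dv (g ^+ e.+1) f ->
      dv (g ^+ e) s.
    move=> g e hg he hge hn; have [i hi] := deriv_ok hK hg.
    have := hann (fun j => (j == i)%:R) g e hg he hge hn.
    rewrite /DerLog /der_app /der_scale (bigD1 i) //= eqxx mulr1 big1 ?addr0 => [hd|j hj].
      exact: (prm_pow_cancel (h3 _ hg) hi hd).
    by rewrite (negbTE hj) mulr0 mul0r.
  have step2 : forall g e, irr g -> dv (g ^+ e) f -> dv (g ^+ e) s.
    move=> g e hg hge; case: e hge => [|e] hge; first by rewrite expr0; apply: dv_unit; exact: unitr1.
    have [g0 [gu _]] := hg; have mg := mu_pos h2 g0 gu.
    have bound : forall k, dv (g ^+ k) f -> (k <= mmu f)%N.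
      move=> k [q hq]; have q0 : q != 0 by apply: contraNneq hf => q0; rewrite hq q0 mul0r.
      rewrite hq h1 ?expf_neq0 // mu_exp //; apply: leq_trans (leq_addl _ _).
      by rewrite leq_pmulr.
    have [m [hem [Qm nQm]]] := @exmax (fun k => dv (g ^+ k) f) _ _ hge bound.
    apply: dv_trans (dv_exp _ hem) (step1 g m hg _ Qm nQm).
    by apply: leq_trans hem.
  have step3 : forall c : mpoly K n, c != 0 -> forall s,
      (forall g e, irr g -> dv (g ^+ e) c -> dv (g ^+ e) s) -> dv c s.
    apply: (fac_ind h1 h2 h3 (Q := fun c => forall s,
      (forall g e, irr g -> dv (g ^+ e) c -> dv (g ^+ e) s) -> dv c s)).
      by move=> u hu s' _; apply: dv_unit.
    move=> p c hpi hpp c0 IH s' H.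
    have [s1 hs1] : dv p s'.
      have := H p 1%N hpi; rewrite expr1; apply; apply: dv_mulr; apply: dv_refl.
    suff hc : dv c s1 by rewrite hs1 mulrC; apply: dv_mul2 hc (dv_refl p).
    apply: IH => h e hh hhe.
    have [h0 [hu _]] := hh.
    case: (classic (dv h p)) => [[t ht]|hnp].
      have [_ [_ hpi']] := hpi.
      have tu : t \is a GRing.unit.
        by case: (hpi' t h ht) => // hu'; exfalso; move: hu; rewrite hu'.
      have [q hq'] := hhe.
      have [w hw] : dv (h ^+ e.+1) s'.
        apply: H => //; exists (t * q).
        by rewrite ht hq' exprSr mulrACA (mulrC h).
      have e1 : s1 * t * h = w * h ^+ e * h by rewrite -mulrA -ht -hs1 hw exprSr mulrA.
      have e2 := mulIf h0 e1.
      by exists (w / t); rewrite -(mulrK tu s1) e2 mulrAC.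
    apply: (prm_pow_cancel (h3 _ hh) hnp); rewrite -hs1.
    by apply: H => //; apply: dv_mull.
  exact: step3 f hf s step2.
rewrite /DerLog /der_app /der_scale.
apply: (dv_trans hge).
apply: (big_ind (fun x => dv f x)); [exact: dv0 | exact: dv_add | move=> i _].
by apply: dv_mulr; apply: dv_mulr; apply: dv_mulf.
Qed.
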